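(* Let $X$ be a real Banach space and $\varepsilon>0$. Let $C\subseteq X$ be closed, bounded, convex and non-$\varepsilon$-dentable, let $C'\subseteq C$ be closed and convex, and let $D\subseteq C$ satisfy $\alpha(D)<\varepsilon$. If $C=\overline{\operatorname{co}}(C'\cup D)$, then $C=C'$.
   Context: $\overline{\operatorname{co}}(E)$ denotes the norm-closed convex hull of $E$. For $A\subseteq X$, the Kuratowski measure of noncompactness $\alpha(A)$ is the infimum of all $\varepsilon>0$ such that $A$ can be covered by finitely many sets of diameter at most $\varepsilon$. For a bounded nonempty $A\subseteq X$, $f$ in the closed unit ball of $X^*$ and $\delta>0$, the slice $S(f,A,\delta)=\{a\in A: f(a)>\sup f(A)-\delta\}$; a slice of $A$ is any set of this form. A bounded set $A$ is non-$\varepsilon$-dentable if every slice of $A$ has diameter $>\varepsilon$. *)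

(* Defs.v *)
From Stdlib Require Import Reals List.
Open Scope R_scope.

Record NormedSpace := {
  car :> Type;
  vzero : car;
  vadd : car -> car -> car;
  vopp : car -> car;
  vscal : R -> car -> car;
  vnorm : car -> R;
  vadd_assoc : forall x y z, vadd x (vadd y z) = vadd (vadd x y) z;
  vadd_comm : forall x y, vadd x y = vadd y x;
  vadd_0l : forall x, vadd vzero x = x;
  vadd_oppl : forall x, vadd (vopp x) x = vzero;
  vscal_assoc : forall a b x, vscal a (vscal b x) = vscal (a * b) x;
  vscal_1 : forall x, vscal 1 x = x;
  vscal_distr_v : forall a x y, vscal a (vadd x y) = vadd (vscal a x) (vscal a y);
  vscal_distr_s : forall a b x, vscal (a + b) x = vadd (vscal a x) (vscal b x);
  vnorm_eq0 : forall x, vnorm x = 0 -> x = vzero;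
  vnorm_scal : forall a x, vnorm (vscal a x) = Rabs a * vnorm x;
  vnorm_triangle : forall x y, vnorm (vadd x y) <= vnorm x + vnorm y
}.

Arguments vzero {n}.
Arguments vadd {n}.
Arguments vopp {n}.
Arguments vscal {n}.
Arguments vnorm {n}.

Definition vdist {X : NormedSpace} (x y : X) : R := vnorm (vadd x (vopp y)).

Definition complete (X : NormedSpace) : Prop :=
  forall u : nat -> X,
    (forall e, 0 < e -> exists N, forall m n, (N <= m)%nat -> (N <= n)%nat ->
        vdist (u m) (u n) < e) ->
    exists l : X, forall e, 0 < e -> exists N, forall n, (N <= n)%nat ->
        vdist (u n) l < e.

Definition Banach (X : NormedSpace) : Prop := complete X.

Definition ns_subset {X : NormedSpace} (A B : X -> Prop) : Prop :=
  forall x, A x -> B x.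

Definition ns_bounded {X : NormedSpace} (A : X -> Prop) : Prop :=
  exists M, forall x, A x -> vnorm x <= M.

Definition ns_closed {X : NormedSpace} (A : X -> Prop) : Prop :=
  forall x, ~ A x -> exists r, 0 < r /\ forall y, vdist x y < r -> ~ A y.

Definition ns_convex {X : NormedSpace} (A : X -> Prop) : Prop :=
  forall x y t, A x -> A y -> 0 <= t <= 1 ->
    A (vadd (vscal t x) (vscal (1 - t) y)).

Definition closed_convex_hull {X : NormedSpace} (E : X -> Prop) : X -> Prop :=
  fun x => forall K : X -> Prop, ns_closed K -> ns_convex K -> ns_subset E K -> K x.

Definition ns_union {X : NormedSpace} (A B : X -> Prop) : X -> Prop :=
  fun x => A x \/ B x.

Definition diam_le {X : NormedSpace} (A : X -> Prop) (e : R) : Prop :=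
  forall x y, A x -> A y -> vdist x y <= e.

Definition diam_gt {X : NormedSpace} (A : X -> Prop) (e : R) : Prop :=
  exists x y, A x /\ A y /\ e < vdist x y.

Definition finite_cover_diam {X : NormedSpace} (A : X -> Prop) (e : R) : Prop :=
  exists l : list (X -> Prop),
    (forall S, In S l -> diam_le S e) /\
    (forall x, A x -> exists S, In S l /\ S x).

Definition is_glb (E : R -> Prop) (m : R) : Prop :=
  (forall x, E x -> m <= x) /\ (forall b, (forall x, E x -> b <= x) -> b <= m).

Definition is_kuratowski {X : NormedSpace} (A : X -> Prop) (a : R) : Prop :=
  is_glb (fun e => 0 < e /\ finite_cover_diam A e) a.

Definition dual_unit_ball {X : NormedSpace} (f : X -> R) : Prop :=
  (forall x y, f (vadd x y) = f x + f y) /\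
  (forall a x, f (vscal a x) = a * f x) /\
  (forall x, Rabs (f x) <= vnorm x).

Definition slice {X : NormedSpace} (f : X -> R) (A : X -> Prop) (delta : R) : X -> Prop :=
  fun a => A a /\ exists s, is_lub (fun r => exists b, A b /\ r = f b) s /\ s - delta < f a.

Definition non_dentable {X : NormedSpace} (A : X -> Prop) (e : R) : Prop :=
  ns_bounded A /\
  forall f delta, dual_unit_ball f -> 0 < delta -> diam_gt (slice f A delta) e.

(* Main.v *)
Require Import Defs.
From Stdlib Require Import Reals List Lra Lia ClassicalEpsilon Classical.
From mathcomp Require classical_sets.
Open Scope R_scope.

Lemma my_zorn (T:Type) (P : (T->Prop) -> Prop) :
  (forall F : (T->Prop)->Prop, (forall G, F G -> P G) ->
     (forall G1 G2, F G1 -> F G2 -> (forall t, G1 t -> G2 t) \/ (forall t, G2 t -> G1 t)) ->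
     P (fun a => exists2 G, F G & G a)) ->
  exists A, P A /\ forall B, (forall t, A t -> B t) -> ~ (forall t, B t -> A t) -> ~ P B.
Proof.
intros H.
destruct (@classical_sets.Zorn_bigcup T P) as [A [PA HA]].
- intros F HF Ht. apply H; auto.
- exists A. split; auto. intros B H1 H2. apply HA. split; auto.
Qed.


Section Basics.
Variable X : NormedSpace.

Lemma vadd_0r (x : X) : vadd x vzero = x.
Proof. rewrite vadd_comm. apply vadd_0l. Qed.

Lemma vadd_cancel (x y z : X) : vadd x y = vadd x z -> y = z.
Proof.
intros H. rewrite <- (vadd_0l _ y), <- (vadd_0l _ z), <- (vadd_oppl _ x).
rewrite <- !vadd_assoc, H. reflexivity.
Qed.

Lemma vscal_0 (x : X) : vscal 0 x = vzero.
Proof.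
symmetry. apply (vadd_cancel (vscal 0 x)).
rewrite vadd_0r, <- vscal_distr_s, Rplus_0_r. reflexivity.
Qed.

Lemma vscal_zero (a : R) : vscal a (@vzero X) = vzero.
Proof.
symmetry. apply (vadd_cancel (vscal a vzero)).
rewrite vadd_0r, <- vscal_distr_v, vadd_0r. reflexivity.
Qed.

Lemma vopp_scal (x : X) : vopp x = vscal (-1) x.
Proof.
apply (vadd_cancel x).
rewrite vadd_comm, vadd_oppl.
rewrite <- (vscal_1 _ x) at 1. rewrite <- vscal_distr_s.
replace (1 + -1) with 0 by ring. rewrite vscal_0. reflexivity.
Qed.

Lemma vadd_swap4 (a b c d : X) : vadd (vadd a b) (vadd c d) = vadd (vadd a c) (vadd b d).
Proof.
rewrite <- !vadd_assoc. f_equal. rewrite !vadd_assoc. f_equal. apply vadd_comm.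
Qed.

Inductive vexp := VAtom (n : nat) | VZero | VAdd (a b : vexp) | VOpp (a : vexp) | VScal (r : R) (a : vexp).

Fixpoint veval (env : list X) (e : vexp) : X :=
  match e with
  | VAtom n => nth n env vzero
  | VZero => vzero
  | VAdd a b => vadd (veval env a) (veval env b)
  | VOpp a => vopp (veval env a)
  | VScal r a => vscal r (veval env a)
  end.

Fixpoint coef (e : vexp) (i : nat) : R :=
  match e with
  | VAtom n => if Nat.eqb n i then 1 else 0
  | VZero => 0
  | VAdd a b => coef a i + coef b i
  | VOpp a => - coef a i
  | VScal r a => r * coef a i
  end.

Fixpoint lcs (cf : nat -> R) (env : list X) (i : nat) : X :=
  match env with
  | nil => vzero
  | v :: env' => vadd (vscal (cf i) v) (lcs cf env' (S i))
  end.

Lemma lcs_ext cf1 cf2 env i : (forall j, cf1 j = cf2 j) -> lcs cf1 env i = lcs cf2 env i.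
Proof. intros H; revert i; induction env; simpl; intros; auto. rewrite H, IHenv; auto. Qed.

Lemma lcs_add cf1 cf2 env i :
  lcs (fun j => cf1 j + cf2 j) env i = vadd (lcs cf1 env i) (lcs cf2 env i).
Proof.
revert i; induction env; simpl; intros. rewrite vadd_0l; auto.
rewrite IHenv, vscal_distr_s. apply vadd_swap4.
Qed.

Lemma lcs_scal r cf env i : lcs (fun j => r * cf j) env i = vscal r (lcs cf env i).
Proof.
revert i; induction env; simpl; intros. rewrite vscal_zero; auto.
rewrite IHenv, vscal_distr_v, vscal_assoc. auto.
Qed.

Lemma lcs_zero env i : lcs (fun _ => 0) env i = vzero.
Proof.
revert i; induction env; simpl; intros; auto. rewrite IHenv, vscal_0, vadd_0l. auto.
Qed.

Lemma lcs_ext_ge cf1 cf2 env i :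
  (forall j, (i <= j)%nat -> cf1 j = cf2 j) -> lcs cf1 env i = lcs cf2 env i.
Proof.
revert i; induction env; simpl; intros; auto.
rewrite (H i) by lia. rewrite IHenv; auto. intros; apply H; lia.
Qed.

Lemma lcs_nth env n i :
  nth n env vzero = lcs (fun j => if Nat.eqb (n + i) j then 1 else 0) env i.
Proof.
revert n i; induction env; simpl; intros.
- destruct n; symmetry; apply (lcs_zero nil i).
- destruct n.
  + simpl. rewrite Nat.eqb_refl, vscal_1.
    rewrite (lcs_ext_ge _ (fun _ => 0)). rewrite lcs_zero, vadd_0r; auto.
    intros j Hj. destruct (Nat.eqb_spec i j); auto; lia.
  + rewrite (IHenv n (S i)).
    replace (Nat.eqb (S n + i) i) with false.
    rewrite vscal_0, vadd_0l. apply lcs_ext; intros j.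
    replace (n + S i)%nat with (S n + i)%nat by lia. auto.
    symmetry; apply Nat.eqb_neq; lia.
Qed.

Lemma veval_lcs env e : veval env e = lcs (coef e) env 0.
Proof.
induction e; simpl.
- rewrite (lcs_nth env n 0). apply lcs_ext. intros j. rewrite Nat.add_0_r. auto.
- symmetry; apply lcs_zero.
- rewrite IHe1, IHe2, <- lcs_add. auto.
- rewrite IHe, vopp_scal, <- lcs_scal. apply lcs_ext; intros; ring.
- rewrite IHe, <- lcs_scal. auto.
Qed.

Fixpoint coef_eqs (e1 e2 : vexp) (env : list X) (i : nat) : Prop :=
  match env with
  | nil => True
  | _ :: env' => coef e1 i = coef e2 i /\ coef_eqs e1 e2 env' (S i)
  end.

Lemma vexp_eq env e1 e2 : coef_eqs e1 e2 env 0 -> veval env e1 = veval env e2.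
Proof.
rewrite !veval_lcs. generalize 0%nat. induction env; simpl; intros i H; auto.
destruct H as [H1 H2]. rewrite H1, (IHenv (S i) H2). auto.
Qed.

End Basics.

Ltac vlookup x l :=
  match l with
  | x :: _ => constr:(O)
  | _ :: ?l' => let n := vlookup x l' in constr:(S n)
  end.

Ltac vatoms t acc :=
  match t with
  | vadd ?a ?b => let acc1 := vatoms a acc in vatoms b acc1
  | vopp ?a => vatoms a acc
  | vscal _ ?a => vatoms a acc
  | vzero => acc
  | _ => match acc with
         | context [t] => acc
         | _ => constr:(app acc (t :: nil))
         end
  end.

Ltac vreify t env :=
  match t with
  | vadd ?a ?b => let ea := vreify a env in let eb := vreify b env in constr:(VAdd ea eb)
  | vopp ?a => let ea := vreify a env in constr:(VOpp ea)
  | vscal ?r ?a => let ea := vreify a env in constr:(VScal r ea)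
  | vzero => constr:(VZero)
  | _ => let n := vlookup t env in constr:(VAtom n)
  end.

Ltac vring0 :=
  unfold vdist;
  match goal with
  |- @eq (car ?Xs) ?l ?r =>
    let env0 := constr:(@nil (car Xs)) in
    let env1 := vatoms l env0 in
    let env2 := vatoms r env1 in
    let env := eval simpl app in env2 in
    let el := vreify l env in
    let er := vreify r env in
    change (veval Xs env el = veval Xs env er);
    apply vexp_eq; cbv beta iota delta [coef_eqs coef Nat.eqb]
  end.

Ltac vring := vring0; repeat split; try ring.

Section Test.
Variable X : NormedSpace.
Goal forall (x y z : X) t, vadd (vscal t (vadd x (vopp y))) (vscal (1-t) (vadd z (vopp y))) =
   vadd (vadd (vscal t x) (vscal (1-t) z)) (vopp y).
Proof. intros. vring. Qed.
End Test.


Lemma Rabs_m1 : Rabs (-1) = 1.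
Proof. rewrite Rabs_left; lra. Qed.

Lemma Rdiv_le_0_compat (a b : R) : 0 <= a -> 0 < b -> 0 <= a / b.
Proof. intros. unfold Rdiv. apply Rmult_le_pos; auto. left; apply Rinv_0_lt_compat; auto. Qed.

Section Norms.
Variable X : NormedSpace.

Lemma norm_zero : vnorm (@vzero X) = 0.
Proof. rewrite <- (vscal_0 X vzero), vnorm_scal, Rabs_R0. ring. Qed.

Lemma norm_nonneg (x : X) : 0 <= vnorm x.
Proof.
assert (H := vnorm_triangle X x (vscal (-1) x)).
replace (vadd x (vscal (-1) x)) with (@vzero X) in H by vring.
rewrite norm_zero, vnorm_scal, Rabs_m1 in H. lra.
Qed.

Lemma norm_scal_pos (a : R) (x : X) : 0 <= a -> vnorm (vscal a x) = a * vnorm x.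
Proof. intros; rewrite vnorm_scal, Rabs_pos_eq; auto. Qed.

Lemma norm_opp (x : X) : vnorm (vopp x) = vnorm x.
Proof. rewrite vopp_scal, vnorm_scal, Rabs_m1; ring. Qed.

Lemma vdist_sym (x y : X) : vdist x y = vdist y x.
Proof.
unfold vdist. replace (vadd y (vopp x)) with (vopp (vadd x (vopp y))) by vring.
symmetry; apply norm_opp.
Qed.

Lemma vdist_tri (x y z : X) : vdist x z <= vdist x y + vdist y z.
Proof.
unfold vdist. replace (vadd x (vopp z)) with (vadd (vadd x (vopp y)) (vadd y (vopp z))) by vring.
apply vnorm_triangle.
Qed.

Lemma vdist_self (x : X) : vdist x x = 0.
Proof. unfold vdist. replace (vadd x (vopp x)) with (@vzero X) by vring. apply norm_zero. Qed.

Definition linf (f : X -> R) := (forall x y, f (vadd x y) = f x + f y) /\ (forall a x, f (vscal a x) = a * f x).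

Lemma linf_opp f x : linf f -> f (vopp x) = - f x.
Proof. intros [_ H]. rewrite vopp_scal, H. ring. Qed.

Lemma linf_sub f x y : linf f -> f (vadd x (vopp y)) = f x - f y.
Proof. intros Hf. rewrite (proj1 Hf), linf_opp; auto. Qed.

Lemma dub_lip f (x y : X) : dual_unit_ball f -> Rabs (f x - f y) <= vdist x y.
Proof.
intros [H1 [H2 H3]]. unfold vdist. rewrite <- linf_sub. apply H3. split; auto.
Qed.

End Norms.

Section HB.
Variable X : NormedSpace.
Variables (K0 : X -> Prop) (x0 w0 : X) (r : R).
Hypotheses (HK0 : ns_convex K0) (Hw0 : K0 w0) (Hr : forall w, K0 w -> r <= vnorm (vadd x0 (vopp w))).

Definition Dm (x : X) (a : R) := forall t w, 0 <= t -> K0 w ->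
  a <= vnorm (vadd x (vscal t (vadd x0 (vopp w)))) - t * r.

Definition Good (G : X * R -> Prop) :=
  (forall p q, G p -> G q -> G (vadd (fst p) (fst q), snd p + snd q)) /\
  (forall l p, G p -> G (vscal l (fst p), l * snd p)) /\
  (forall a, G (vzero, a) -> a = 0) /\
  (forall p, G p -> Dm (fst p) (snd p)).

Lemma cone t1 t2 w1 w2 : 0 <= t1 -> 0 <= t2 -> K0 w1 -> K0 w2 ->
  exists w, K0 w /\ vadd (vscal t1 (vadd x0 (vopp w1))) (vscal t2 (vadd x0 (vopp w2)))
     = vscal (t1 + t2) (vadd x0 (vopp w)).
Proof.
intros H1 H2 Hw1 Hw2.
destruct (Req_dec (t1 + t2) 0) as [E|E].
- exists w1; split; auto. assert (t1 = 0) by lra. assert (t2 = 0) by lra. subst. vring.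
- exists (vadd (vscal (t1/(t1+t2)) w1) (vscal (1 - t1/(t1+t2)) w2)). split.
  + apply HK0; auto. split. apply Rdiv_le_0_compat; lra.
    apply (Rmult_le_reg_r (t1+t2)); [lra|]. field_simplify; lra.
  + vring0; repeat split; field; auto.
Qed.

Lemma good_fun G x a b : Good G -> G (x, a) -> G (x, b) -> a = b.
Proof.
intros [Ha [Hs [Hz _]]] H1 H2.
assert (H := Ha _ _ H1 (Hs (-1) _ H2)). simpl in H.
replace (vadd x (vscal (-1) x)) with (@vzero X) in H by vring.
apply Hz in H. lra.
Qed.

Lemma HB_sep : exists f, dual_unit_ball f /\ forall a, K0 a -> f a + r <= f x0.
Proof.
destruct (my_zorn (X * R) Good) as [A [GA MA]].
{ intros F HF Htot. split; [|split; [|split]].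
  - intros p q [G1 F1 P1] [G2 F2 P2].
    destruct (Htot G1 G2 F1 F2) as [S|S].
    + exists G2; auto. destruct (HF G2 F2) as [Ha _]. apply Ha; auto.
    + exists G1; auto. destruct (HF G1 F1) as [Ha _]. apply Ha; auto.
  - intros l p [G1 F1 P1]. exists G1; auto. destruct (HF G1 F1) as [_ [Hs _]]. apply Hs; auto.
  - intros a [G1 F1 P1]. destruct (HF G1 F1) as [_ [_ [Hz _]]]. apply Hz; auto.
  - intros p [G1 F1 P1]. destruct (HF G1 F1) as [_ [_ [_ Hd]]]. apply Hd; auto. }
assert (Max : forall B : X * R -> Prop, (forall p, A p -> B p) -> Good B -> forall p, B p -> A p).
{ intros B H1 H2. apply NNPP. intros H3. apply (MA B H1 H3 H2). }
destruct GA as [Aadd [Ascal [Azero ADm]]].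
assert (A00 : A (vzero, 0)).
{ apply (Max (fun p => A p \/ p = (vzero, 0))); [auto| |auto].
  split; [|split; [|split]].
  - intros [x a] [y b] [P|P] [Q|Q]; simpl.
    + left. apply (Aadd (x,a) (y,b)); auto.
    + left. inversion Q; subst. rewrite vadd_0r, Rplus_0_r; auto.
    + left. inversion P; subst. rewrite vadd_0l, Rplus_0_l; auto.
    + right. inversion P; inversion Q; subst. rewrite vadd_0l, Rplus_0_l; auto.
  - intros l [x a] [P|P]; simpl.
    + left. apply (Ascal l (x,a)); auto.
    + right. inversion P; subst. rewrite vscal_zero, Rmult_0_r; auto.
  - intros a [P|P]. apply Azero; auto. inversion P; auto.
  - intros [x a] [P|P]. apply (ADm _ P). inversion P; subst. simpl.
    intros t w Ht Hw. rewrite vadd_0l, norm_scal_pos by auto.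
    specialize (Hr w Hw). nra. }
assert (Full : forall x, exists a, A (x, a)).
{ intros x. apply NNPP. intros Nx.
  set (L := fun y => exists v b t w, A (v, b) /\ 0 <= t /\ K0 w /\
        y = b - (vnorm (vadd (vadd v (vopp x)) (vscal t (vadd x0 (vopp w)))) - t * r)).
  assert (Key : forall v b t w u b' t' w', A (v, b) -> A (u, b') -> 0 <= t -> 0 <= t' -> K0 w -> K0 w' ->
      b - (vnorm (vadd (vadd v (vopp x)) (vscal t (vadd x0 (vopp w)))) - t * r) <=
      vnorm (vadd (vadd u x) (vscal t' (vadd x0 (vopp w')))) - t' * r - b').
  { intros v b t w u b' t' w' Av Au Ht Ht' Hw Hw'.
    destruct (cone t t' w w' Ht Ht' Hw Hw') as [W [HW EW]].
    assert (H := ADm _ (Aadd _ _ Au Av) (t + t') W ltac:(lra) HW). simpl in H.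
    rewrite <- EW in H.
    replace (vadd (vadd u v) (vadd (vscal t (vadd x0 (vopp w))) (vscal t' (vadd x0 (vopp w')))))
      with (vadd (vadd (vadd v (vopp x)) (vscal t (vadd x0 (vopp w))))
                 (vadd (vadd u x) (vscal t' (vadd x0 (vopp w'))))) in H by vring.
    assert (T := vnorm_triangle X (vadd (vadd v (vopp x)) (vscal t (vadd x0 (vopp w))))
                 (vadd (vadd u x) (vscal t' (vadd x0 (vopp w'))))).
    lra. }
  destruct (completeness L) as [c [Hc1 Hc2]].
  { exists (vnorm (vadd (vadd vzero x) (vscal 0 (vadd x0 (vopp w0)))) - 0 * r - 0).
    intros y [v [b [t [w [Av [Ht [Hw E]]]]]]]. subst y. apply Key; auto; lra. }
  { exists (0 - (vnorm (vadd (vadd vzero (vopp x)) (vscal 0 (vadd x0 (vopp w0)))) - 0 * r)).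
    exists vzero, 0, 0, w0. repeat split; auto; lra. }
  assert (Lc : forall v b t w, A (v, b) -> 0 <= t -> K0 w ->
     b - (vnorm (vadd (vadd v (vopp x)) (vscal t (vadd x0 (vopp w)))) - t * r) <= c).
  { intros v b t w Av Ht Hw. apply Hc1. exists v, b, t, w; auto. }
  assert (Uc : forall u b' t' w', A (u, b') -> 0 <= t' -> K0 w' ->
     c <= vnorm (vadd (vadd u x) (vscal t' (vadd x0 (vopp w')))) - t' * r - b').
  { intros u b' t' w' Au Ht Hw. apply Hc2. intros y [v [b [t [w [Av [Ht2 [Hw2 E]]]]]]]. subst y.
    apply Key; auto. }
  set (B := fun p => exists u b s, A (u, b) /\ p = (vadd u (vscal s x), b + s * c)).
  assert (AB : forall p, A p -> B p).
  { intros [u b] P. exists u, b, 0. split; auto. rewrite vscal_0, vadd_0r. f_equal; ring. }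
  assert (Bx : B (x, c)).
  { exists vzero, 0, 1. split; auto. f_equal. vring. ring. }
  apply Nx. exists c. apply (Max B AB); auto.
  split; [|split; [|split]].
  - intros p q [u1 [b1 [s1 [P1 E1]]]] [u2 [b2 [s2 [P2 E2]]]]. subst p q. simpl.
    exists (vadd u1 u2), (b1 + b2), (s1 + s2). split.
    apply (Aadd (u1,b1) (u2,b2)); auto. f_equal. vring. ring.
  - intros l p [u1 [b1 [s1 [P1 E1]]]]. subst p. simpl.
    exists (vscal l u1), (l * b1), (l * s1). split.
    apply (Ascal l (u1,b1)); auto. f_equal. vring. ring.
  - intros a [u [b [s [P E]]]]. injection E; intros E2 E1.
    destruct (Req_dec s 0) as [S|S].
    + subst s. rewrite vscal_0, vadd_0r in E1. subst u. apply Azero in P. subst. ring.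
    + exfalso. apply Nx. exists ((-1/s) * b).
      replace x with (vscal (-1/s) u). apply (Ascal (-1/s) (u, b)); auto.
      transitivity (vadd (vscal (1/s) (vadd u (vscal s x))) (vscal (-1/s) u)).
      rewrite <- E1, vscal_zero, vadd_0l. auto.
      vring0; repeat split; field; auto.
  - intros p [u [b [s [P E]]]]. subst p. simpl. intros t w Ht Hw.
    destruct (Rtotal_order s 0) as [S|[S|S]].
    + set (m := - s). assert (Hm : 0 < m) by (unfold m; lra).
      assert (H := Lc (vscal (1/m) u) ((1/m) * b) (t/m) w (Ascal (1/m) (u,b) P)
                     ltac:(apply Rdiv_le_0_compat; lra) Hw).
      set (N := vnorm (vadd (vadd (vscal (1 / m) u) (vopp x)) (vscal (t / m) (vadd x0 (vopp w))))) in H.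
      assert (EN : vnorm (vadd (vadd u (vscal s x)) (vscal t (vadd x0 (vopp w)))) = m * N).
      { unfold N. rewrite <- norm_scal_pos by lra. f_equal. unfold m.
        vring0; repeat split; field; lra. }
      rewrite EN.
      assert (H' : m * (1 / m * b - (N - t / m * r)) <= m * c) by (apply Rmult_le_compat_l; lra).
      replace (m * (1 / m * b - (N - t / m * r))) with (b - m * N + t * r) in H' by (field; lra).
      unfold m in *. lra.
    + subst s. rewrite vscal_0, vadd_0r, Rmult_0_l, Rplus_0_r. apply (ADm _ P); auto.
    + assert (H := Uc (vscal (1/s) u) ((1/s) * b) (t/s) w (Ascal (1/s) (u,b) P)
                     ltac:(apply Rdiv_le_0_compat; lra) Hw).
      set (N := vnorm (vadd (vadd (vscal (1 / s) u) x) (vscal (t / s) (vadd x0 (vopp w))))) in H.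
      assert (EN : vnorm (vadd (vadd u (vscal s x)) (vscal t (vadd x0 (vopp w)))) = s * N).
      { unfold N. rewrite <- norm_scal_pos by lra. f_equal.
        vring0; repeat split; field; lra. }
      rewrite EN.
      assert (H' : s * c <= s * (N - t / s * r - 1 / s * b)) by (apply Rmult_le_compat_l; lra).
      replace (s * (N - t / s * r - 1 / s * b)) with (s * N - t * r - b) in H' by (field; lra).
      lra. }
set (f := fun x => proj1_sig (constructive_indefinite_description _ (Full x))).
assert (Hf : forall x, A (x, f x)).
{ intros x. unfold f. destruct (constructive_indefinite_description _ (Full x)); auto. }
assert (GA : Good A) by (split; auto).
assert (Lin : linf X f).
{ split.
  - intros x y. apply (good_fun A (vadd x y)); auto. apply (Aadd (x, f x) (y, f y)); auto.
  - intros a x. apply (good_fun A (vscal a x)); auto. apply (Ascal a (x, f x)); auto. }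
assert (Bd : forall x, f x <= vnorm x).
{ intros x. assert (H := ADm _ (Hf x) 0 w0 (Rle_refl 0) Hw0). simpl in H.
  rewrite vscal_0, vadd_0r in H. lra. }
exists f. split.
- split; [apply Lin|split; [apply Lin|]].
  intros x. apply Rabs_le. split; auto.
  assert (H := Bd (vopp x)). rewrite linf_opp, norm_opp in H; auto. lra.
- intros a Ha. assert (H := ADm _ (Hf (vadd a (vopp x0))) 1 a ltac:(lra) Ha). simpl in H.
  replace (vadd (vadd a (vopp x0)) (vscal 1 (vadd x0 (vopp a)))) with (@vzero X) in H by vring.
  rewrite norm_zero, linf_sub in H; auto. lra.
Qed.

End HB.


Section Hull.
Variable X : NormedSpace.

Lemma hull_min (E K : X -> Prop) : ns_closed K -> ns_convex K -> ns_subset E K ->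
  forall x, closed_convex_hull E x -> K x.
Proof. intros H1 H2 H3 x H. apply H; auto. Qed.

Lemma hull_sub (E : X -> Prop) x : E x -> closed_convex_hull E x.
Proof. intros H K _ _ HK. apply HK; auto. Qed.

Lemma hull_convex (E : X -> Prop) : ns_convex (closed_convex_hull E).
Proof. intros x y t Hx Hy Ht K H1 H2 H3. apply H2; auto; [apply Hx|apply Hy]; auto. Qed.

Lemma hull_closed (E : X -> Prop) : ns_closed (closed_convex_hull E).
Proof.
intros x Hx. unfold closed_convex_hull in Hx.
apply not_all_ex_not in Hx. destruct Hx as [K HK].
assert (H1 : ns_closed K /\ ns_convex K /\ ns_subset E K /\ ~ K x).
{ repeat split; apply NNPP; intro N; apply HK; intros; tauto. }
destruct H1 as [Kc [Kv [KE Kx]]].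
destruct (Kc x Kx) as [r [Hr Hb]]. exists r; split; auto.
intros y Hy Hh. apply (Hb y Hy). apply Hh; auto.
Qed.

Lemma hull_mono (E E' : X -> Prop) : ns_subset E E' ->
  forall x, closed_convex_hull E x -> closed_convex_hull E' x.
Proof. intros H x Hx K H1 H2 H3. apply Hx; auto. intros y Hy; apply H3, H, Hy. Qed.

Lemma ball_closed (c : X) e : ns_closed (fun z => vdist z c <= e).
Proof.
intros x Hx. exists (vdist x c - e). split. lra.
intros y Hy Hc. assert (T := vdist_tri X x y c). lra.
Qed.

Lemma ball_convex (c : X) e : ns_convex (fun z => vdist z c <= e).
Proof.
intros x y t Hx Hy Ht. unfold vdist in *.
replace (vadd (vadd (vscal t x) (vscal (1 - t) y)) (vopp c)) with
  (vadd (vscal t (vadd x (vopp c))) (vscal (1-t) (vadd y (vopp c)))) by vring.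
eapply Rle_trans. apply vnorm_triangle.
rewrite !norm_scal_pos by lra.
assert (t * vnorm (vadd x (vopp c)) <= t * e) by (apply Rmult_le_compat_l; lra).
assert ((1-t) * vnorm (vadd y (vopp c)) <= (1-t) * e) by (apply Rmult_le_compat_l; lra).
lra.
Qed.

Lemma hull_diam (Y : X -> Prop) e : diam_le Y e -> diam_le (closed_convex_hull Y) e.
Proof.
intros H.
assert (S1 : forall y z, Y y -> closed_convex_hull Y z -> vdist z y <= e).
{ intros y z Hy Hz. apply (hull_min Y (fun z => vdist z y <= e)); auto.
  apply ball_closed. apply ball_convex. intros w Hw. apply H; auto. }
intros z1 z2 H1 H2.
apply (hull_min Y (fun w => vdist w z2 <= e)); auto.
apply ball_closed. apply ball_convex. intros w Hw. rewrite vdist_sym. apply S1; auto.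
Qed.

Lemma lub_unique (E : R -> Prop) a b : is_lub E a -> is_lub E b -> a = b.
Proof. intros [A1 A2] [B1 B2]. apply Rle_antisym; auto. Qed.

Lemma piece (eps e' : R) (C A K : X -> Prop) :
  ns_bounded C -> non_dentable C eps -> ns_closed A -> ns_convex A -> ns_subset A C ->
  ns_convex K -> ns_subset K C -> diam_le K e' -> e' < eps ->
  (forall x, C x -> closed_convex_hull (ns_union A K) x) -> forall x, C x -> A x.
Proof.
intros HCb HCnd HAc HAv HAC HKv HKC HKd He Hh x0 Cx0.
apply NNPP. intros nA.
destruct (classic (exists k, K k)) as [[k0 Kk0]|NK].
2:{ apply nA. apply (hull_min (ns_union A K) A); auto.
    intros y [Hy|Hy]; auto. exfalso; apply NK; eauto. }
destruct (HAc x0 nA) as [r [Hr Hrb]].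
assert (Hrd : forall w, A w -> r <= vnorm (vadd x0 (vopp w))).
{ intros w Hw. apply Rnot_lt_le. intros Hl. apply (Hrb w Hl Hw). }
assert (Hf : exists f, dual_unit_ball f /\ forall a, A a -> f a + r <= f x0).
{ destruct (classic (exists w, A w)) as [[w0 Hw0]|NA].
  - apply (HB_sep X A x0 w0 r); auto.
  - exists (fun _ => 0). split.
    + split; [intros; ring|split; [intros; ring|]]. intros; rewrite Rabs_R0; apply norm_nonneg.
    + intros a Ha; exfalso; apply NA; eauto. }
destruct Hf as [f [Hfd Hsep]].
assert (Lin : linf X f) by (destruct Hfd as [? [? ?]]; split; auto).
destruct HCb as [M0 HM0].
assert (M0pos : 0 <= M0) by (eapply Rle_trans; [apply norm_nonneg| apply (HM0 x0 Cx0)]).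
assert (fle : forall b, f b <= vnorm b).
{ intros b. destruct Hfd as [_ [_ H3]]. eapply Rle_trans; [apply Rle_abs|apply H3]. }
set (E := fun y => exists b, C b /\ y = f b).
destruct (completeness E) as [M HM].
{ exists M0. intros y [b [Cb Eb]]. subst y. eapply Rle_trans; [apply fle|apply HM0; auto]. }
{ exists (f x0), x0; auto. }
assert (fM : forall b, C b -> f b <= M). { intros b Cb. apply (proj1 HM). exists b; auto. }
set (c := 2 * M0 / r).
assert (cpos : 0 <= c) by (unfold c; apply Rdiv_le_0_compat; lra).
assert (cr : c * r = 2 * M0) by (unfold c; field; lra).
set (T := fun z => forall eta, 0 < eta -> exists k, K k /\ vdist z k <= c * (M - f z) + eta).
assert (CT : forall x, C x -> T x).
{ intros x Cx. apply (hull_min (ns_union A K) T); auto.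
  - intros z nT. unfold T in nT. apply not_all_ex_not in nT. destruct nT as [eta Heta].
    apply imply_to_and in Heta. destruct Heta as [Heta NH].
    assert (NH' : forall k, K k -> c * (M - f z) + eta < vdist z k).
    { intros k Kk. apply Rnot_le_lt. intros Hl. apply NH. exists k; auto. }
    exists (eta / (2 * (c + 1))). split. apply Rdiv_lt_0_compat; lra.
    intros y Hy Ty. destruct (Ty (eta/2) ltac:(lra)) as [k [Kk Hk]].
    assert (H1 := NH' k Kk). assert (H2 := vdist_tri X z y k).
    assert (H3 : f z - f y <= vdist z y) by (eapply Rle_trans; [apply Rle_abs|apply (dub_lip X f z y Hfd)]).
    assert (H4 : c * (f z - f y) <= c * vdist z y) by (apply Rmult_le_compat_l; lra).
    assert (H5 : (c + 1) * vdist z y <= eta / 2).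
    { assert (H6 : (c+1) * vdist z y <= (c+1) * (eta / (2 * (c + 1)))) by (apply Rmult_le_compat_l; lra).
      replace ((c+1) * (eta / (2 * (c + 1)))) with (eta/2) in H6 by (field; lra). auto. }
    lra.
  - intros z1 z2 t T1 T2 Ht eta Heta.
    destruct (T1 eta Heta) as [k1 [K1 H1]]. destruct (T2 eta Heta) as [k2 [K2 H2]].
    exists (vadd (vscal t k1) (vscal (1 - t) k2)). split. apply HKv; auto.
    unfold vdist in *.
    replace (vadd (vadd (vscal t z1) (vscal (1 - t) z2)) (vopp (vadd (vscal t k1) (vscal (1 - t) k2))))
      with (vadd (vscal t (vadd z1 (vopp k1))) (vscal (1-t) (vadd z2 (vopp k2)))) by vring.
    eapply Rle_trans. apply vnorm_triangle.
    rewrite !norm_scal_pos by lra.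
    destruct Lin as [L1 L2]. rewrite L1, !L2.
    assert (t * vnorm (vadd z1 (vopp k1)) <= t * (c * (M - f z1) + eta)) by (apply Rmult_le_compat_l; lra).
    assert ((1-t) * vnorm (vadd z2 (vopp k2)) <= (1-t) * (c * (M - f z2) + eta)) by (apply Rmult_le_compat_l; lra).
    assert (Eq : t * (c * (M - f z1) + eta) + (1-t) * (c * (M - f z2) + eta)
                 = c * (M - (t * f z1 + (1 - t) * f z2)) + eta) by ring.
    lra.
  - intros z [Az|Kz] eta Heta.
    + exists k0. split; auto.
      assert (H1 : vdist z k0 <= 2 * M0).
      { unfold vdist. eapply Rle_trans. apply vnorm_triangle. rewrite norm_opp.
        assert (Q1 := HM0 z (HAC z Az)). assert (Q2 := HM0 k0 (HKC k0 Kk0)). lra. }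
      assert (H2 := Hsep z Az). assert (H3 := fM x0 Cx0).
      assert (c * r <= c * (M - f z)) by (apply Rmult_le_compat_l; lra). lra.
    + exists z. split; auto. rewrite vdist_self.
      assert (0 <= c * (M - f z)) by (apply Rmult_le_pos; auto; assert (Q := fM z (HKC z Kz)); lra). lra. }
set (delta := (eps - e') / (4 * (c + 1))).
assert (Hd : 0 < delta) by (unfold delta; apply Rdiv_lt_0_compat; lra).
assert (Hcd : (c + 1) * delta = (eps - e') / 4) by (unfold delta; field; lra).
destruct HCnd as [_ HCnd].
destruct (HCnd f delta Hfd Hd) as [z1 [z2 [[C1 [s1 [L1 S1]]] [[C2 [s2 [L2 S2]]] Hgt]]]].
assert (s1 = M) by (apply (lub_unique E); auto). assert (s2 = M) by (apply (lub_unique E); auto).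
subst s1 s2.
set (eta := (eps - e') / 8).
destruct (CT z1 C1 eta ltac:(unfold eta; lra)) as [k1 [K1 H1]].
destruct (CT z2 C2 eta ltac:(unfold eta; lra)) as [k2 [K2 H2]].
assert (c * (M - f z1) <= c * delta) by (apply Rmult_le_compat_l; lra).
assert (c * (M - f z2) <= c * delta) by (apply Rmult_le_compat_l; lra).
assert (H3 := HKd k1 k2 K1 K2).
assert (T1 := vdist_tri X z1 k1 z2). assert (T2 := vdist_tri X k1 k2 z2).
rewrite (vdist_sym X k2 z2) in T2.
unfold eta in *. lra.
Qed.

End Hull.


Section Main.
Variable X : NormedSpace.
Variables (eps e : R) (C D : X -> Prop).
Hypotheses (HCcl : ns_closed C) (HCb : ns_bounded C) (HCcv : ns_convex C)
  (HCnd : non_dentable C eps) (HDC : ns_subset D C) (He : e < eps).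

Lemma chain (l : list (X -> Prop)) : (forall S, In S l -> diam_le S e) ->
  forall A, ns_closed A -> ns_convex A -> ns_subset A C ->
  (forall x, C x -> closed_convex_hull (ns_union A (fun y => D y /\ exists S, In S l /\ S y)) x) ->
  forall x, C x -> A x.
Proof.
induction l as [|S l IH]; intros Hl A HAc HAv HAC Hh x Cx.
- eapply (hull_min X _ A HAc HAv); [|apply Hh; auto].
  intros y [Hy|[_ [S [[] _]]]]; auto.
- set (A' := closed_convex_hull (ns_union A (fun y => D y /\ exists S, In S l /\ S y))).
  assert (A'C : ns_subset A' C).
  { intros y Hy. eapply (hull_min X _ C HCcl HCcv); [|apply Hy].
    intros z [Hz|[Hz _]]; auto. }
  assert (CA' : forall x, C x -> A' x).
  { apply (piece X eps e C A' (closed_convex_hull (fun y => D y /\ S y))); auto.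
    - apply hull_closed.
    - apply hull_convex.
    - apply hull_convex.
    - intros y Hy. eapply (hull_min X _ C HCcl HCcv); [|apply Hy]. intros z [Hz _]; auto.
    - apply hull_diam. intros y z [_ Hy] [_ Hz]. apply (Hl S); simpl; auto.
    - intros y Cy.
      specialize (Hh y Cy). intros Q Qc Qv Qs. apply Hh; auto.
      intros z [Hz|[Dz [S' [[E|E] Sz]]]].
      + apply Qs. left. apply hull_sub. left; auto.
      + subst S'. apply Qs. right. apply hull_sub. auto.
      + apply Qs. left. apply hull_sub. right. split; eauto. }
  apply (IH (fun S' H => Hl S' (or_intror H)) A HAc HAv HAC); auto.
Qed.

End Main.

Theorem mainTheorem2 (X : NormedSpace) (HX : Banach X) (eps : R) (Heps : 0 < eps)
  (C C' D : X -> Prop)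
  (HCcl : ns_closed C) (HCb : ns_bounded C) (HCcv : ns_convex C) (HCnd : non_dentable C eps)
  (HC'C : ns_subset C' C) (HC'cl : ns_closed C') (HC'cv : ns_convex C')
  (HDC : ns_subset D C) (HDa : exists a, is_kuratowski D a /\ a < eps)
  (Hhull : forall x, C x <-> closed_convex_hull (ns_union C' D) x) :
  forall x, C x <-> C' x.
Proof.
destruct HDa as [a [[Ha1 Ha2] Hae]].
assert (Ex : exists e, (0 < e /\ finite_cover_diam D e) /\ e < eps).
{ apply NNPP. intros N. assert (Hb : (a + eps) / 2 <= a).
  { apply Ha2. intros y Hy. apply Rnot_lt_le. intros Hl. apply N. exists y. split; auto. lra. }
  lra. }
destruct Ex as [e [[He0 [l [Hl Hcov]]] Hee]].
intros x; split; [|apply HC'C].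
apply (chain X eps e C D HCcl HCb HCcv HCnd HDC Hee l Hl C' HC'cl HC'cv HC'C).
intros y Cy. apply Hhull in Cy. revert Cy. apply hull_mono.
intros z [Hz|Hz]; [left; auto|right; split; auto].
Qed.
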